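(* Let $I=\langle Q,D,\tau_{in},\tau_{out}\rangle$ be an instance of DTP where $Q$ is nonrecursive, connected, and contains no rigid atoms. Let $a$ be the maximum radius of a rule of $\Pi_Q$, and let $\mathbf T$ be the set consisting of $\tau_{out}$ and all time points occurring in $\Pi_Q$. Let $U$ be a $\tau_{in}$-update involving only objects in $C_I$, let $P$ be a predicate of $\Pi_Q$, $\vec o$ a tuple of objects and $\tau$ a time point such that $\Pi_Q\cup D\cup U\models P(\vec o,\tau)$ and $|\tau-\tau'|\le a\cdot(\mathrm{rank}(\Pi_Q)-\mathrm{rank}(P))$ for some $\tau'\in\mathbf T$. Then $\Pi_Q\cup D\cup B_I\models P(\vec o,\tau)$, where $B_I$ is the bounded critical update of $I$.
   Context: Temporal Datalog. Constants are partitioned into objects and integer time points; variables into object variables and time variables. A time term is a time point, a time variable, or an expression $t+k$ with $t$ a time variable and $k\in\mathbb{Z}$. Each predicate is either extensional (EDB) or intensional (IDB) and has an arity $n\ge0$, each position being of object sort or time sort; a predicate is rigid if all its positions are of object sort, and temporal if its last position is of time sort and all others are of object sort. An atom $P(t_1,\dots,t_n)$ has terms of the required sorts. A rule is $\bigwedge_i\alpha_i\to\alpha$ with $\alpha$ and all $\alpha_i$ rigid or temporal atoms, $\alpha$ IDB whenever the body is nonempty, and every head variable occurring in the body. A program is a finite set of rules. A fact is a ground rigid or temporal atom without $+$ (identified with the rule $\top\to\alpha$); a dataset is a finite set of EDB facts. Rules are read as universally quantified first-order sentences with $+$ interpreted as integer addition; $\Pi\models\alpha$ denotes entailment. A query is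 $Q=\langle P_Q,\Pi_Q\rangle$ with $\Pi_Q$ a program and $P_Q$ an IDB predicate of $\Pi_Q$; it is temporal if $P_Q$ is temporal. For a temporal query $Q$, dataset $D$ and time point $\tau$, $Q(D,\tau)$ is the set of tuples of objects $\vec o$ with $\Pi_Q\cup D\models P_Q(\vec o,\tau)$. A $\tau_{in}$-history is a dataset consisting of rigid facts and temporal facts with time argument $\le\tau_{in}$; a $\tau_{in}$-update is a dataset consisting of temporal facts with time argument $>\tau_{in}$. Definitive Time Point (DTP): an instance is $\langle Q,D,\tau_{in},\tau_{out}\rangle$ with $Q$ a temporal query, $D$ a $\tau_{in}$-history and $\tau_{out}\le\tau_{in}$; DTP holds for it iff $Q(D,\tau_{out})=Q(D\cup U,\tau_{out})$ for every $\tau_{in}$-update $U$. Critical domain: $C_I$ is the set of all objects occurring in $\Pi_Q\cup D$ together with one fresh object $o_I$. Predicate $P$ depends on $P'$ in $\Pi$ if some rule of $\Pi$ has $P$ in the head and $P'$ in the body; $\Pi$ (or a query with program $\Pi$) is nonrecursive if the graph of this dependency relation is acyclic. $\mathrm{rank}(P)=\mathrm{rank}(P,\Pi)$ is $0$ if $P$ does not occur in a rule head of $\Pi$, and otherwise the maximum of $\mathrm{rank}(P')+1$ over predicates $P'$ on which $P$ depends; $\mathrm{rank}(\Pi)$ is the maximum rank of a predicate of $\Pi$. A rule is connected if it contains at most one time variable and, if a time variable occurs in the body, it also occurs in the head; a query is connected if all its rules are. For a time term $s$, $\Delta(s)=k$ if $s=t+k$ with $t$ a variable, and $\Delta(s)=0$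 otherwise. The radius of a connected rule $r$ mentioning a time variable is the maximum of $|\Delta(s)-\Delta(s')|$ where $s$ is the time argument of the head and $s'$ the time argument of a body atom of $r$. The radius $\mathrm{rad}(\Pi)$ of a connected program is the number of rules of $\Pi$ times the maximum radius of a rule of $\Pi$; $\mathrm{rad}(Q)=\mathrm{rad}(\Pi_Q)$. Bounded critical update: let $\tau_0$ be the maximum of $\tau_{out}$ and the largest time point occurring in $\Pi_Q$; a time point $\tau$ is critical for $I$ if $\tau_{in}<\tau\le\tau_0+\mathrm{rad}(\Pi_Q)$; $B_I$ consists of all facts $P(\vec o,\tau)$ with $P$ a temporal EDB predicate of $\Pi_Q$, $\vec o$ a tuple over $C_I$ and $\tau$ critical. *)

(* Defs.v *)
From Stdlib Require Import ZArith List Relations.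
Import ListNotations.

Definition obj := nat.

Inductive oterm : Type :=
| OVar (x : nat)
| OConst (o : obj).

Inductive tterm : Type :=
| TConst (z : Z)
| TVar (t : nat)
| TPlus (t : nat) (k : Z).

(* Only rigid (all positions object sort) and temporal (last
   position time sort, others object sort) predicates can occur in atoms, so
   a predicate is given by a name, its EDB/IDB status, its number of object
   positions and whether it has a final time position (temporal). *)
Record pred : Type := mkPred {
  pname : nat;
  pidb : bool;
  pobjarity : nat;
  ptemporal : bool
}.

Definition pred_eq_dec (P Q : pred) : {P = Q} + {P <> Q}.
Proof. repeat decide equality. Defined.

Record atom : Type := mkAtom {
  apred : pred;
  aobjs : list oterm;
  atime : option tterm
}.

Definition wf_atom (a : atom) : Prop :=
  length (aobjs a) = pobjarity (apred a) /\
  (ptemporal (apred a) = true <-> atime a <> None).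

Definition rigid_atom (a : atom) : Prop := ptemporal (apred a) = false.

Record rule : Type := mkRule { rbody : list atom; rhead : atom }.

Definition rule_atoms (r : rule) : list atom := rhead r :: rbody r.

Definition tterm_vars (s : tterm) : list nat :=
  match s with TConst _ => [] | TVar t => [t] | TPlus t _ => [t] end.

Definition atom_tvars (a : atom) : list nat :=
  match atime a with Some s => tterm_vars s | None => [] end.

Definition atom_ovars (a : atom) : list nat :=
  flat_map (fun t => match t with OVar x => [x] | OConst _ => [] end) (aobjs a).

Definition atom_objs (a : atom) : list obj :=
  flat_map (fun t => match t with OVar _ => [] | OConst o => [o] end) (aobjs a).

Definition wf_rule (r : rule) : Prop :=
  Forall wf_atom (rule_atoms r) /\
  (rbody r <> [] -> pidb (apred (rhead r)) = true) /\
  (forall x, In x (atom_ovars (rhead r)) ->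
     exists b, In b (rbody r) /\ In x (atom_ovars b)) /\
  (forall t, In t (atom_tvars (rhead r)) ->
     exists b, In b (rbody r) /\ In t (atom_tvars b)).

Definition wf_program (Pi : list rule) : Prop := NoDup Pi /\ Forall wf_rule Pi.

Definition is_fact (a : atom) : Prop :=
  wf_atom a /\
  (forall t, In t (aobjs a) -> exists o, t = OConst o) /\
  (forall s, atime a = Some s -> exists z, s = TConst z).

Definition dataset (D : list atom) : Prop :=
  forall a, In a D -> is_fact a /\ pidb (apred a) = false.

Definition history (tin : Z) (D : list atom) : Prop :=
  dataset D /\
  forall a, In a D ->
    atime a = None \/ exists z, atime a = Some (TConst z) /\ (z <= tin)%Z.

Definition update (tin : Z) (U : list atom) : Prop :=
  dataset U /\
  forall a, In a U -> exists z, atime a = Some (TConst z) /\ (tin < z)%Z.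

Definition gatom (P : pred) (os : list obj) (tau : Z) : atom :=
  mkAtom P (map OConst os) (Some (TConst tau)).

Record structure : Type := mkStructure {
  Dom : Type;
  cst : obj -> Dom;
  rel : pred -> list Dom -> option Z -> Prop
}.

Definition eval_o (M : structure) (ov : nat -> Dom M) (t : oterm) : Dom M :=
  match t with OVar x => ov x | OConst o => cst M o end.

Definition eval_t (tv : nat -> Z) (s : tterm) : Z :=
  match s with TConst z => z | TVar t => tv t | TPlus t k => (tv t + k)%Z end.

Definition holds (M : structure) (ov : nat -> Dom M) (tv : nat -> Z) (a : atom) : Prop :=
  rel M (apred a) (map (eval_o M ov) (aobjs a)) (option_map (eval_t tv) (atime a)).

Definition satisfies_rule (M : structure) (r : rule) : Prop :=
  forall ov tv, (forall b, In b (rbody r) -> holds M ov tv b) -> holds M ov tv (rhead r).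

Definition is_model (M : structure) (S : rule -> Prop) : Prop :=
  forall r, S r -> satisfies_rule M r.

Definition entails (S : rule -> Prop) (a : atom) : Prop :=
  forall M, is_model M S -> forall ov tv, holds M ov tv a.

Definition fact_rule (a : atom) : rule := mkRule [] a.

Definition prog_set (Pi : list rule) : rule -> Prop := fun r => In r Pi.

Definition add_facts (S : rule -> Prop) (F : atom -> Prop) : rule -> Prop :=
  fun r => S r \/ exists a, F a /\ r = fact_rule a.

Definition in_list (l : list atom) : atom -> Prop := fun a => In a l.

Definition prog_preds (Pi : list rule) : list pred :=
  flat_map (fun r => map apred (rule_atoms r)) Pi.

Definition pred_of (Pi : list rule) (P : pred) : Prop := In P (prog_preds Pi).

Record query : Type := mkQuery { qpred : pred; qprog : list rule }.

Definition temporal_query (Q : query) : Prop :=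
  wf_program (qprog Q) /\ pred_of (qprog Q) (qpred Q) /\
  pidb (qpred Q) = true /\ ptemporal (qpred Q) = true.

Definition dtp_instance (Q : query) (D : list atom) (tin tout : Z) : Prop :=
  temporal_query Q /\ history tin D /\ (tout <= tin)%Z.

Definition depends (Pi : list rule) (P P' : pred) : Prop :=
  exists r, In r Pi /\ apred (rhead r) = P /\
    exists b, In b (rbody r) /\ apred b = P'.

Definition nonrecursive (Pi : list rule) : Prop :=
  forall P, ~ clos_trans pred (depends Pi) P P.

(* For a nonrecursive program every
   dependency chain has at most length Pi edges, so fuel (length Pi).+1 yields
   the rank defined in the paper. *)
Fixpoint rank_fuel (Pi : list rule) (n : nat) (P : pred) : nat :=
  match n with
  | O => O
  | S n' =>
      list_max (flat_map (fun r =>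
        if pred_eq_dec (apred (rhead r)) P
        then map (fun b => S (rank_fuel Pi n' (apred b))) (rbody r)
        else []) Pi)
  end.

Definition rank (Pi : list rule) (P : pred) : nat := rank_fuel Pi (S (length Pi)) P.

Definition prog_rank (Pi : list rule) : nat := list_max (map (rank Pi) (prog_preds Pi)).

Definition rule_tvars (r : rule) : list nat := flat_map atom_tvars (rule_atoms r).

Definition connected_rule (r : rule) : Prop :=
  (forall t t', In t (rule_tvars r) -> In t' (rule_tvars r) -> t = t') /\
  (forall t, In t (flat_map atom_tvars (rbody r)) -> In t (atom_tvars (rhead r))).

Definition connected_prog (Pi : list rule) : Prop := Forall connected_rule Pi.

Definition delta (s : tterm) : Z :=
  match s with TPlus _ k => k | _ => 0%Z end.

Definition atom_delta (a : atom) : Z :=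
  match atime a with Some s => delta s | None => 0%Z end.

(* Radius of a rule: max over body atoms of |Δ(head) - Δ(body atom)|.
   For a rule without time variables all Δ's are 0, so this is 0 and does
   not affect the maximum radius of a program. *)
Definition rule_radius (r : rule) : nat :=
  list_max (map (fun b => Z.abs_nat (atom_delta (rhead r) - atom_delta b)) (rbody r)).

Definition max_radius (Pi : list rule) : nat := list_max (map rule_radius Pi).

Definition rad (Pi : list rule) : nat := length Pi * max_radius Pi.

Definition atom_tpoints (a : atom) : list Z :=
  match atime a with Some (TConst z) => [z] | _ => [] end.

Definition prog_tpoints (Pi : list rule) : list Z :=
  flat_map (fun r => flat_map atom_tpoints (rule_atoms r)) Pi.

Definition prog_objs (Pi : list rule) : list obj :=
  flat_map (fun r => flat_map atom_objs (rule_atoms r)) Pi.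

Definition inst_objs (Pi : list rule) (D : list atom) : list obj :=
  prog_objs Pi ++ flat_map atom_objs D.

(* C_I, relative to the chosen fresh object oI *)
Definition in_CI (Pi : list rule) (D : list atom) (oI : obj) (o : obj) : Prop :=
  In o (inst_objs Pi D) \/ o = oI.

Definition tau0 (Pi : list rule) (tout : Z) : Z :=
  fold_right Z.max tout (prog_tpoints Pi).

Definition critical (Pi : list rule) (tin tout : Z) (tau : Z) : Prop :=
  (tin < tau /\ tau <= tau0 Pi tout + Z.of_nat (rad Pi))%Z.

Definition B_I (Pi : list rule) (D : list atom) (tin tout : Z) (oI : obj) : atom -> Prop :=
  fun a => exists P os tau,
    pred_of Pi P /\ ptemporal P = true /\ pidb P = false /\
    length os = pobjarity P /\ Forall (in_CI Pi D oI) os /\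
    critical Pi tin tout tau /\ a = gatom P os tau.

(* Main.v *)
Require Import Defs.
From Stdlib Require Import ZArith List Relations Lia.
Import ListNotations.

Lemma list_max_ge (l : list nat) x : In x l -> x <= list_max l.
Proof.
  intro H. pose proof (proj1 (list_max_le l (list_max l)) (le_n _)) as F.
  rewrite Forall_forall in F. auto.
Qed.

Lemma list_max_in (l : list nat) : list_max l = 0 \/ In (list_max l) l.
Proof.
  induction l as [|x l IH]; simpl; auto.
  destruct (Nat.max_spec x (list_max l)) as [[_ E]|[_ E]]; rewrite E.
  - destruct IH; auto.
  - auto.
Qed.

Section Ch.
Variable Pi : list rule.

Inductive chain : pred -> pred -> list pred -> Prop :=
| ch0 Q : chain Q Q []
| chS Q Q' R l : depends Pi Q Q' -> chain Q' R l -> chain Q R (Q :: l).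

Lemma chain_app Q H l Q' : chain Q H l -> depends Pi H Q' -> chain Q Q' (l ++ [H]).
Proof.
  induction 1; intros; simpl.
  - econstructor; eauto. constructor.
  - econstructor; eauto.
Qed.

Lemma chain_reach Q R l : chain Q R l -> forall x, In x l -> x = Q \/ clos_trans _ (depends Pi) Q x.
Proof.
  induction 1; simpl; intros x Hx; [contradiction|].
  destruct Hx as [<-|Hx]; auto.
  right. destruct (IHchain x Hx) as [<-|Hc].
  - now apply t_step.
  - eapply t_trans; [apply t_step; eauto|exact Hc].
Qed.

Lemma chain_nodup (Hnr : nonrecursive Pi) Q R l : chain Q R l -> NoDup l.
Proof.
  induction 1; constructor; auto.
  intro Hin. destruct (chain_reach _ _ _ H0 _ Hin) as [<-|Hc].
  - apply (Hnr Q). now apply t_step.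
  - apply (Hnr Q). eapply t_trans; [apply t_step; eauto|exact Hc].
Qed.

Lemma chain_incl Q R l : chain Q R l -> incl l (map (fun r => apred (rhead r)) Pi).
Proof.
  induction 1; intros x Hx; simpl in Hx; [contradiction|].
  destruct Hx as [<-|Hx]; auto.
  destruct H as [r [Hr [Hh _]]]. apply in_map_iff. eauto.
Qed.

Lemma chain_len (Hnr : nonrecursive Pi) Q R l : chain Q R l -> length l <= length Pi.
Proof.
  intro H. rewrite <- (length_map (fun r => apred (rhead r)) Pi).
  apply NoDup_incl_length; [eapply chain_nodup|eapply chain_incl]; eauto.
Qed.

Lemma rank_chain n : forall Q, exists R l, chain Q R l /\ length l = rank_fuel Pi n Q.
Proof.
  induction n as [|n IH]; intro Q.
  - exists Q, []. split; [constructor|reflexivity].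
  - simpl. destruct (list_max_in (flat_map (fun r =>
        if pred_eq_dec (apred (rhead r)) Q
        then map (fun b => S (rank_fuel Pi n (apred b))) (rbody r)
        else []) Pi)) as [E|Hin].
    + rewrite E. exists Q, []. split; [constructor|reflexivity].
    + apply in_flat_map in Hin. destruct Hin as [r [Hr Hin]].
      destruct (pred_eq_dec (apred (rhead r)) Q) as [e|]; [|contradiction].
      apply in_map_iff in Hin. destruct Hin as [b [Eb Hb]].
      destruct (IH (apred b)) as [R [l [Hc Hl]]].
      exists R, (Q :: l). split.
      * econstructor; [|exact Hc]. exists r. split; auto. split; auto. eauto.
      * simpl. rewrite <- Eb, Hl. reflexivity.
Qed.

Lemma chain_rank Q R l : chain Q R l -> forall n, length l <= n -> length l <= rank_fuel Pi n Q.
Proof.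
  induction 1; intros n Hn; simpl; [lia|].
  destruct n as [|n]; simpl in Hn; [lia|].
  simpl. destruct H as [r [Hr [Hh [b [Hb Hbp]]]]].
  eapply Nat.le_trans; [|apply list_max_ge].
  2:{ apply in_flat_map. exists r. split; [exact Hr|].
      destruct (pred_eq_dec (apred (rhead r)) Q) as [e|e]; [|contradiction].
      apply in_map_iff. exists b. split; [reflexivity|exact Hb]. }
  subst. specialize (IHchain n ltac:(lia)). lia.
Qed.

Lemma prog_rank_le (Hnr : nonrecursive Pi) : prog_rank Pi <= length Pi.
Proof.
  unfold prog_rank. apply list_max_le. apply Forall_forall.
  intros x Hx. apply in_map_iff in Hx. destruct Hx as [Q [<- _]].
  destruct (rank_chain (S (length Pi)) Q) as [R [l [Hc Hl]]].
  unfold rank. rewrite <- Hl. eapply chain_len; eauto.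
Qed.

End Ch.

Inductive W (Pi : list rule) (P : pred) (tau : Z) : nat -> pred -> Z -> Prop :=
| W0 : W Pi P tau 0 P tau
| WS : forall k r tv b s sb, W Pi P tau k (apred (rhead r)) (eval_t tv s) ->
    In r Pi -> In b (rbody r) -> atime (rhead r) = Some s -> atime b = Some sb ->
    W Pi P tau (S k) (apred b) (eval_t tv sb).

Lemma eval_delta tv s x : In x (tterm_vars s) -> eval_t tv s = (tv x + delta s)%Z.
Proof. destruct s; simpl; intro H; [contradiction| |]; destruct H as [H|[]]; subst; lia. Qed.

Lemma var_case Pi k r tv b s sb x (Hconn : connected_prog Pi) (Hr : In r Pi) (Hb : In b (rbody r))
  (Hs : atime (rhead r) = Some s) (Hsb : atime b = Some sb) (Hx : In x (tterm_vars sb)) tau :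
  ((Z.abs (eval_t tv s - tau) <= Z.of_nat k * Z.of_nat (max_radius Pi))%Z \/
   exists c, In c (prog_tpoints Pi) /\ (Z.abs (eval_t tv s - c) <= Z.of_nat k * Z.of_nat (max_radius Pi))%Z) ->
  ((Z.abs (eval_t tv sb - tau) <= Z.of_nat (S k) * Z.of_nat (max_radius Pi))%Z \/
   exists c, In c (prog_tpoints Pi) /\ (Z.abs (eval_t tv sb - c) <= Z.of_nat (S k) * Z.of_nat (max_radius Pi))%Z).
Proof.
  intro Ht.
  unfold connected_prog in Hconn. rewrite Forall_forall in Hconn.
  destruct (Hconn r Hr) as [_ Hc].
  assert (Hxh : In x (tterm_vars s)).
  { specialize (Hc x). unfold atom_tvars in Hc. rewrite Hs in Hc. apply Hc.
    apply in_flat_map. exists b. split; auto. unfold atom_tvars. rewrite Hsb. exact Hx. }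
  rewrite (eval_delta tv s x Hxh) in Ht. rewrite (eval_delta tv sb x Hx).
  assert (Hrad : (Z.abs (delta s - delta sb) <= Z.of_nat (max_radius Pi))%Z).
  { assert (H1 : Z.abs_nat (atom_delta (rhead r) - atom_delta b) <= rule_radius r).
    { unfold rule_radius. apply list_max_ge. apply in_map_iff. exists b. split; auto. }
    assert (H2 : rule_radius r <= max_radius Pi).
    { unfold max_radius. apply list_max_ge. apply in_map. exact Hr. }
    unfold atom_delta in H1. rewrite Hs, Hsb in H1. lia. }
  rewrite Nat2Z.inj_succ. destruct Ht as [Ht|[c [Hc' Ht]]]; [left|right; exists c; split; auto]; lia.
Qed.

Lemma W_inv Pi P tau (Hconn : connected_prog Pi) : forall k Q t, W Pi P tau k Q t ->
  (exists l, chain Pi P Q l /\ length l = k) /\ (Q = P \/ pred_of Pi Q) /\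
  ((Z.abs (t - tau) <= Z.of_nat k * Z.of_nat (max_radius Pi))%Z \/
   exists c, In c (prog_tpoints Pi) /\ (Z.abs (t - c) <= Z.of_nat k * Z.of_nat (max_radius Pi))%Z).
Proof.
  induction 1 as [|k r tv b s sb HW IH Hr Hb Hs Hsb].
  - split; [exists []; split; [constructor|reflexivity]|]. split; auto. left. lia.
  - destruct IH as [[l [Hc Hl]] [_ Ht]]. split; [|split].
    + exists (l ++ [apred (rhead r)]). split.
      * apply chain_app; auto. exists r. split; auto. split; auto. eauto.
      * rewrite length_app; simpl; lia.
    + right. unfold pred_of, prog_preds. apply in_flat_map. exists r. split; auto.
      apply in_map. right. exact Hb.
    + destruct sb as [z|x|x d].
      * right. exists z. split; [|change (eval_t tv (TConst z)) with z; rewrite Z.sub_diag; lia].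
        unfold prog_tpoints. apply in_flat_map. exists r. split; auto.
        apply in_flat_map. exists b. split; [right; exact Hb|].
        unfold atom_tpoints. rewrite Hsb. left. reflexivity.
      * apply (var_case Pi k r tv b s (TVar x) x); auto. simpl; auto.
      * apply (var_case Pi k r tv b s (TPlus x d) x); auto. simpl; auto.
Qed.

Lemma tau0_ge_tout Pi tout : (tout <= tau0 Pi tout)%Z.
Proof. unfold tau0. induction (prog_tpoints Pi); simpl; lia. Qed.

Lemma tau0_ge_pt Pi tout z : In z (prog_tpoints Pi) -> (z <= tau0 Pi tout)%Z.
Proof. unfold tau0. induction (prog_tpoints Pi); simpl; [tauto|]. intros [<-|H]; [lia|]. specialize (IHl H). lia. Qed.

Lemma all_const (l : list oterm) : (forall t, In t l -> exists o, t = OConst o) -> exists os, l = map OConst os.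
Proof.
  induction l as [|t l IH]; intro H; [exists []; reflexivity|].
  destruct (H t (or_introl eq_refl)) as [o ->].
  destruct IH as [os ->]; [intros; apply H; right; auto|]. exists (o :: os). reflexivity.
Qed.

Lemma objs_map os : atom_objs (mkAtom (mkPred 0 false 0 false) (map OConst os) None) = os.
Proof. unfold atom_objs; simpl. induction os; simpl; congruence. Qed.

Definition relW (M : structure) (X : pred -> Z -> Prop) : pred -> list (Dom M) -> option Z -> Prop :=
  fun Q args ot => match ot with None => rel M Q args None | Some t => X Q t -> rel M Q args (Some t) end.
Definition restr M X := mkStructure (Dom M) (cst M) (relW M X).

Theorem lemma4 (Q : query) (D : list atom) (tin tout : Z)
  (HI : dtp_instance Q D tin tout)
  (Hnr : nonrecursive (qprog Q))
  (Hconn : connected_prog (qprog Q))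
  (Hnorigid : forall r a, In r (qprog Q) -> In a (rule_atoms r) -> ~ rigid_atom a)
  (oI : obj) (HoI : ~ In oI (inst_objs (qprog Q) D))
  (U : list atom) (HU : update tin U)
  (HUobj : forall a o, In a U -> In o (atom_objs a) -> in_CI (qprog Q) D oI o)
  (P : pred) (os : list obj) (tau : Z)
  (HP : pred_of (qprog Q) P)
  (Hatom : wf_atom (gatom P os tau))
  (Hent : entails (add_facts (add_facts (prog_set (qprog Q)) (in_list D)) (in_list U))
                  (gatom P os tau))
  (Htau : exists tau', (tau' = tout \/ In tau' (prog_tpoints (qprog Q))) /\
      (Z.abs (tau - tau') <=
         Z.of_nat (max_radius (qprog Q)) *
         (Z.of_nat (prog_rank (qprog Q)) - Z.of_nat (rank (qprog Q) P)))%Z) :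
  entails (add_facts (add_facts (prog_set (qprog Q)) (in_list D))
                     (B_I (qprog Q) D tin tout oI))
          (gatom P os tau).
Proof.
  set (Pi := qprog Q) in *.
  destruct HI as [[[_ Hwf] _] [_ _]].
  intros M HM ov tv.
  pose (M' := restr M (fun Q t => exists k, W Pi P tau k Q t)).
  assert (Hbound : forall k Q' t, W Pi P tau k Q' t -> (t <= tau0 Pi tout + Z.of_nat (rad Pi))%Z).
  { intros k Q' t HW. destruct (W_inv Pi P tau Hconn k Q' t HW) as [[l [Hc Hl]] [_ Ht]].
    pose proof (chain_len Pi Hnr _ _ _ Hc) as HL.
    pose proof (chain_rank Pi _ _ _ Hc (S (length Pi)) ltac:(lia)) as HrP.
    pose proof (prog_rank_le Pi Hnr) as HR.
    fold (rank Pi P) in HrP.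
    destruct Htau as [tau' [Htau' Hd]].
    assert (Ht' : (tau' <= tau0 Pi tout)%Z).
    { destruct Htau' as [->|H]; [apply tau0_ge_tout|apply tau0_ge_pt; auto]. }
    unfold rad. rewrite Nat2Z.inj_mul. subst k.
    destruct Ht as [Ht|[c [Hc' Ht]]].
    - nia.
    - pose proof (tau0_ge_pt Pi tout c Hc'). nia. }
  assert (HM' : is_model M' (add_facts (add_facts (prog_set Pi) (in_list D)) (in_list U))).
  { intros r [[Hr|[a [Ha ->]]]|[a [Ha ->]]].
    - intros ov' tv' Hbody.
      unfold wf_program in Hwf. rewrite Forall_forall in Hwf.
      destruct (Hwf r Hr) as [Hwa _]. rewrite Forall_forall in Hwa.
      assert (Htime : forall a, In a (rule_atoms r) -> exists s, atime a = Some s).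
      { intros a Ha. destruct (Hwa a Ha) as [_ Hiff].
        pose proof (Hnorigid r a Hr Ha) as Hnr'. unfold rigid_atom in Hnr'.
        destruct (atime a) as [s|]; [eauto|].
        exfalso. apply Hnr'. destruct (ptemporal (apred a)) eqn:E; auto.
        destruct (proj1 Hiff eq_refl); auto. }
      destruct (Htime (rhead r) (or_introl eq_refl)) as [s Hs].
      unfold holds. rewrite Hs. simpl. intros [k Hk].
      assert (HMh := HM r (or_introl (or_introl Hr)) ov' tv').
      unfold holds in HMh. rewrite Hs in HMh. apply HMh.
      intros b Hb. destruct (Htime b (or_intror Hb)) as [sb Hsb].
      specialize (Hbody b Hb). unfold holds in Hbody |- *. rewrite Hsb in Hbody |- *.
      apply Hbody. exists (S k). eapply WS; eauto.
    - intros ov' tv' _.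
      assert (HMa := HM (fact_rule a) (or_introl (or_intror (ex_intro _ a (conj Ha eq_refl)))) ov' tv' (fun b H => match H with end)).
      unfold holds in *. simpl in *. destruct (option_map (eval_t tv') (atime a)); simpl; auto.
    - intros ov' tv' _.
      destruct HU as [Hds Hut]. destruct (Hut a Ha) as [z [Hz Hlt]].
      destruct (Hds a Ha) as [[Hwfa [Hc _]] Hedb].
      unfold holds. simpl. rewrite Hz. simpl. intros [k Hk].
      destruct (W_inv Pi P tau Hconn k _ _ Hk) as [_ [Hpred _]].
      pose proof (Hbound k _ _ Hk) as Hb.
      destruct (all_const _ Hc) as [os' Hos].
      assert (HB : B_I Pi D tin tout oI a).
      { exists (apred a), os', z. split; [destruct Hpred as [<-|]; auto|].
        destruct Hwfa as [Hlen Hiff]. split; [apply Hiff; rewrite Hz; discriminate|].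
        split; [exact Hedb|]. split; [rewrite Hos, length_map in Hlen; exact Hlen|].
        split.
        - apply Forall_forall. intros o Ho. apply (HUobj a o Ha).
          unfold atom_objs. rewrite Hos. clear -Ho. induction os'; simpl in *; tauto.
        - split; [split; lia|]. destruct a; simpl in *; subst; reflexivity. }
      assert (HMa := HM (fact_rule a) (or_intror (ex_intro _ a (conj HB eq_refl))) ov' tv' (fun b H => match H with end)).
      unfold holds in HMa. simpl in HMa. rewrite Hz in HMa. exact HMa. }
  specialize (Hent M' HM' ov tv). unfold holds, gatom in *. simpl in *.
  apply Hent. exists 0. constructor.
Qed.
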